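(* Let $G$ be a finite connected graph with a real structure, let $D_1,D_2$ be real divisors on $G$ and let $f:V(G)\to\mathbb Z$ satisfy $\Delta(f)=D_1-D_2$. Then $\overline f=f$, where $\overline f(v)=f(\overline v)$.
   Context: A finite graph $G$ has vertex set $V(G)$, edge set $E(G)$ and incidence function $\psi$ assigning to each edge a set of one or two vertices (loops and multiple edges allowed). A real structure on $G$ is a pair of involutions of $V(G)$ and $E(G)$, written $v\mapsto\overline v$, $e\mapsto\overline e$, with $\psi(\overline e)=\overline{\psi(e)}$. A divisor is a formal $\mathbb Z$-linear combination $D=\sum_v D(v)v$ of vertices; its conjugate is $\overline D(v)=D(\overline v)$, and $D$ is real if $\overline D=D$. For $f:V(G)\to\mathbb Z$, $\Delta(f)(v)=\sum_{e\in E(G),\,\psi(e)=\{v,w\}}(f(w)-f(v))$. *)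

(* Defs.v *)
From mathcomp Require Import all_boot all_order all_algebra.
Set Implicit Arguments. Unset Strict Implicit. Unset Printing Implicit Defensive.
Import Order.TTheory GRing.Theory Num.Theory.
Local Open Scope ring_scope.

(* A finite graph: vertices V, edges E (finite types), incidence psi assigning
   to each edge a set of one or two vertices (loops / multi-edges allowed). *)
Definition is_incidence (V E : finType) (psi : E -> {set V}) : Prop :=
  forall e, (0 < #|psi e| <= 2)%N.

Definition adj (V E : finType) (psi : E -> {set V}) : rel V :=
  fun u w => [exists e, psi e == [set u; w]].

Definition graph_connected (V E : finType) (psi : E -> {set V}) : Prop :=
  forall u w : V, connect (adj psi) u w.

Definition real_structure (V E : finType) (psi : E -> {set V})
    (cv : V -> V) (ce : E -> E) : Prop :=
  involutive cv /\ involutive ce /\ forall e, psi (ce e) = cv @: psi e.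

Definition real_divisor (V : finType) (cv : V -> V) (D : V -> int) : Prop :=
  forall v, D (cv v) = D v.

(* Laplacian: Delta(f)(v) = sum over edges e with psi(e) = {v,w} of f(w)-f(v).
   For each edge e, at most one w satisfies psi e = {v,w} unless it is a loop,
   where w = v and the contribution is 0. *)
Definition laplacian (V E : finType) (psi : E -> {set V}) (f : V -> int)
    (v : V) : int :=
  \sum_(e : E) \sum_(w : V | psi e == [set v; w]) (f w - f v).

(* Main.v *)
Require Import Defs.
From mathcomp Require Import all_boot all_order all_algebra.
From mathcomp Require Import zify.
Import Order.TTheory GRing.Theory Num.Theory.
Local Open Scope ring_scope.

Lemma lap_conj (V E : finType) (psi : E -> {set V}) (cv : V -> V) (ce : E -> E)
  (f : V -> int) :
  real_structure psi cv ce ->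
  forall v, laplacian psi (fun x => f (cv x)) v = laplacian psi f (cv v).
Proof.
move=> [Hcv [Hce Hpsi]] v.
have icv : injective cv := can_inj Hcv.
rewrite /laplacian [RHS](reindex_inj (can_inj Hce)) /=.
apply: eq_bigr => e _.
rewrite [RHS](reindex_inj icv) /=.
apply: eq_bigl => w.
rewrite Hpsi. by rewrite -!imset_set1 -imsetU (inj_eq (imset_inj icv)).
Qed.

Lemma lapB (V E : finType) (psi : E -> {set V}) (f g : V -> int) v :
  laplacian psi (fun x => f x - g x) v = laplacian psi f v - laplacian psi g v.
Proof.
rewrite /laplacian -sumrB; apply: eq_bigr => e _.
rewrite -sumrB; apply: eq_bigr => w _; lia.
Qed.

Lemma harmonic_const (V E : finType) (psi : E -> {set V}) (g : V -> int) :
  graph_connected psi ->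
  (forall v, laplacian psi g v = 0) ->
  forall u w, g u = g w.
Proof.
move=> Hc H0 u w.
case: (@arg_maxP _ _ _ u predT g isT) => m _ Hm.
have step : forall x y, adj psi x y -> g x = g m -> g y = g m.
  move=> x y /existsP [e /eqP He] Hx.
  have Hle : forall e' y', psi e' == [set x; y'] -> 0 <= - (g y' - g x).
    by move=> e' y' _; rewrite oppr_ge0 subr_le0 Hx; apply: Hm.
  have Hs : forall e', 0 <= - \sum_(y' | psi e' == [set x; y']) (g y' - g x).
    by move=> e'; rewrite -sumrN; apply: sumr_ge0 => y' /Hle.
  have Ht : \sum_e' (- \sum_(y' | psi e' == [set x; y']) (g y' - g x)) = 0.
    by rewrite sumrN -/(laplacian psi g x) H0 oppr0.
  have := psumr_eq0P (P := predT) (fun e' _ => Hs e') Ht (i := e) isT.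
  move=> Hz.
  rewrite -sumrN in Hz.
  have := psumr_eq0P (fun y' H => Hle e y' H) Hz (i := y).
  move=> /(_ (introT eqP He)) /eqP; rewrite oppr_eq0 subr_eq0 => /eqP ->.
  exact: Hx.
have adjC : forall x y, adj psi x y = adj psi y x.
  by move=> x y; rewrite /adj; apply: eq_existsb => e; rewrite setUC.
have Hcl : closed (adj psi) [pred x | g x == g m].
  move=> x y Hxy; rewrite /= ; apply/eqP/eqP.
    exact: step.
  by apply: step; rewrite adjC.
have Hu := closed_connect Hcl (Hc m u).
have Hw := closed_connect Hcl (Hc m w).
rewrite !inE eqxx in Hu Hw.
by move/esym/eqP: Hu => ->; move/esym/eqP: Hw => ->.
Qed.

Theorem lemma1 (V E : finType) (psi : E -> {set V})
    (cv : V -> V) (ce : E -> E) (D1 D2 : V -> int) (f : V -> int) :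
  is_incidence psi ->
  graph_connected psi ->
  real_structure psi cv ce ->
  real_divisor cv D1 -> real_divisor cv D2 ->
  (forall v, laplacian psi f v = D1 v - D2 v) ->
  forall v, f (cv v) = f v.
Proof.
move=> _ Hc Hrs H1 H2 Hl v.
have Hcv : involutive cv by case: Hrs.
pose g := fun x => f (cv x) - f x.
have Hg : forall x, laplacian psi g x = 0.
  move=> x; rewrite /g lapB (@lap_conj _ _ _ _ _ f Hrs) !Hl H1 H2; lia.
have := @harmonic_const _ _ _ _ Hc Hg (cv v) v.
rewrite /g Hcv => H.
apply/eqP; rewrite -subr_eq0; apply/eqP; lia.
Qed.
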